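(* For every $n\ge3$, the toric ideal $I_{\mathbb{Z}_2,n}$ is generated by binomials of degree two.
   Context: For a finite abelian group $G$ (written additively) and integer $n\ge2$, $I_{G,n}$ denotes the kernel of the $\mathbb{C}$-algebra homomorphism $$\mathbb{C}[q_{g_1,\dots,g_n}: g_1,\dots,g_n\in G]\to\mathbb{C}[a^{(i)}_g: g\in G,\ i=1,\dots,n+1],\qquad q_{g_1,\dots,g_n}\mapsto a^{(1)}_{g_1}a^{(2)}_{g_2}\cdots a^{(n)}_{g_n}\,a^{(n+1)}_{g_1+\cdots+g_n}.$$ *)

(* Defs.v *)
From HB Require Import structures.
From mathcomp Require Import all_boot all_order all_algebra.
From mathcomp Require Import mpoly.
From mathcomp Require Import complex.
From mathcomp Require Import reals.
Set Implicit Arguments. Unset Strict Implicit. Unset Printing Implicit Defensive.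
Import Order.TTheory GRing.Theory Num.Theory.
Local Open Scope ring_scope.

Definition Cplx (R : realType) := complex R.

(* Index type of the variables q_{g_1,...,g_n}: tuples (g_1,...,g_n) in G^n. *)
Definition qidx (G : finZmodType) (n : nat) := {ffun 'I_n -> G}.
(* Index type of the variables a^{(i)}_g, i = 1..n+1 (encoded as 'I_n.+1), g in G. *)
Definition aidx (G : finZmodType) (n : nat) := ('I_n.+1 * G)%type.

Definition qring (R : realType) (G : finZmodType) (n : nat) :=
  {mpoly (Cplx R)[#|{: qidx G n}|]}.
Definition aring (R : realType) (G : finZmodType) (n : nat) :=
  {mpoly (Cplx R)[#|{: aidx G n}|]}.

Definition avar (R : realType) (G : finZmodType) (n : nat) (i : 'I_n.+1) (g : G)
  : aring R G n := 'X_(enum_rank ((i, g) : aidx G n)).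

(* Image of q_{g_1..g_n}: a^{(1)}_{g_1} ... a^{(n)}_{g_n} a^{(n+1)}_{g_1+...+g_n}.
   Index i : 'I_n corresponds to superscript i+1; ord_max to superscript n+1. *)
Definition qimage (R : realType) (G : finZmodType) (n : nat) (g : qidx G n)
  : aring R G n :=
  (\prod_(i < n) avar R (widen_ord (leqnSn n) i) (g i))
    * avar R ord_max (\sum_(i < n) g i).

Definition toric_map (R : realType) (G : finZmodType) (n : nat) (p : qring R G n)
  : aring R G n :=
  p \mPo [tuple qimage R (enum_val j) | j < #|{: qidx G n}|].

Definition in_toric_ideal (R : realType) (G : finZmodType) (n : nat) (p : qring R G n)
  : Prop := toric_map p = 0.

Definition deg2_binomial (R : realType) (G : finZmodType) (n : nat) (b : qring R G n)
  : Prop :=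
  exists (u v : 'X_{1.. #|{: qidx G n}|}),
    mdeg u = 2%N /\ mdeg v = 2%N /\ b = 'X_[u] - 'X_[v].

Definition toric_ideal_generated_by_deg2_binomials
  (R : realType) (G : finZmodType) (n : nat) : Prop :=
  exists B : seq (qring R G n),
    (forall b, b \in B -> deg2_binomial b /\ in_toric_ideal b) /\
    (forall p : qring R G n, in_toric_ideal p ->
       exists c : seq (qring R G n), size c = size B /\
         p = \sum_(i < size B) c`_i * B`_i).

(* Main.v *)
Require Import Defs.
From HB Require Import structures.
From mathcomp Require Import all_boot all_order all_algebra.
From mathcomp Require Import mpoly complex reals.
Set Implicit Arguments. Unset Strict Implicit. Unset Printing Implicit Defensive.
Import Order.TTheory GRing.Theory Num.Theory.
Local Open Scope ring_scope.

Section Toric.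
Variable (R : realType) (n : nat).
Local Notation G := 'Z_2.
Local Notation K := #|{: qidx G n}|.
Local Notation Ka := #|{: aidx G n}|.
Local Notation Q := (qring R G n).
Local Notation A := (aring R G n).

Definition ext (g : qidx G n) (x : 'I_n.+1) : G :=
  if unlift ord_max x is Some j then g j else \sum_i g i.

Lemma ext_w g (j : 'I_n) : ext g (widen_ord (leqnSn n) j) = g j.
Proof.
have -> : widen_ord (leqnSn n) j = lift ord_max j by apply/val_inj; rewrite [RHS]lift_max.
by rewrite /ext liftK.
Qed.

Lemma ext_max g : ext g ord_max = \sum_i g i.
Proof. by rewrite /ext unlift_none. Qed.

Definition eimg (g : qidx G n) : 'X_{1..Ka} :=
  (\sum_(x : 'I_n.+1) U_(enum_rank ((x, ext g x) : aidx G n)))%MM.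

Lemma qimageE g : qimage R g = 'X_[eimg g].
Proof.
rewrite /qimage /eimg -[X in _ = X](mprodXnE _ (fun x : 'I_n.+1 => (U_(enum_rank ((x, ext g x) : aidx G n)))%MM) xpredT (fun _ => 1%N)).
rewrite big_ord_recr /= ext_max expr1; congr (_ * _).
by apply: eq_bigr => i _; rewrite expr1 ext_w.
Qed.

Definition E (j : 'I_K) := ext (enum_val j).

Definition img (m : 'X_{1..K}) : 'X_{1..Ka} :=
  (\sum_(j < K) eimg (enum_val j) *+ m j)%MM.

Lemma toricX m : toric_map 'X_[m] = 'X_[img m] :> A.
Proof.
rewrite /toric_map comp_mpolyX /img -mprodXnE.
by apply: eq_bigr => j _; rewrite tnth_mktuple qimageE.
Qed.

Definition cnt (m : 'X_{1..K}) (x : 'I_n.+1) (c : G) : nat :=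
  (\sum_(j < K) m j * (E j x == c))%N.

Lemma eimgE g x c : eimg g (enum_rank ((x, c) : aidx G n)) = (ext g x == c).
Proof.
rewrite /eimg mnm_sumE (bigD1 x) //= mnm1E big1 ?addn0.
  by rewrite (inj_eq enum_rank_inj) xpair_eqE eqxx.
move=> y yx; rewrite mnm1E (inj_eq enum_rank_inj) xpair_eqE.
by rewrite (negbTE yx).
Qed.

Lemma imgE m x c : img m (enum_rank ((x, c) : aidx G n)) = cnt m x c.
Proof.
rewrite /img mnm_sumE /cnt; apply: eq_bigr => j _.
by rewrite mulmnE eimgE mulnC.
Qed.

Lemma img_cnt m m' : img m = img m' <-> (forall x c, cnt m x c = cnt m' x c).
Proof.
split=> [H x c|H]; first by rewrite -!imgE H.
apply/mnmP => r; rewrite -(enum_valK r); case: (enum_val r) => x c.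
by rewrite !imgE.
Qed.

End Toric.
Lemma z2_01 (a : 'Z_2) : a = 0 \/ a = 1.
Proof. case: a => [[|[|//]] i]; [left|right]; exact/val_inj. Qed.
Ltac z2c a := case: (z2_01 a) => ->.
Ltac z2fin := intros; (try apply/eqP); vm_compute in *; try discriminate; try reflexivity.
Lemma z2a (a b : 'Z_2) : a != b -> b = a + 1.
Proof. by z2c a; z2c b; z2fin. Qed.
Lemma z2b (a : 'Z_2) : a + 1 + 1 = a.
Proof. by z2c a; z2fin. Qed.
Lemma z2c2 (a : 'Z_2) : a + a = 0.
Proof. by z2c a; z2fin. Qed.
Lemma z2d (a b c : 'Z_2) : a != b -> ((c == a) + (c == b) = 1)%N.
Proof. by z2c a; z2c b; z2c c; z2fin. Qed.
Lemma z2e (a b : 'Z_2) : a - b = (a != b)%:R.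
Proof. by z2c a; z2c b; z2fin. Qed.
Lemma z2f (c : 'Z_2) : (nat_of_bool (c == 0%R) + nat_of_bool (c == 1%R) = 1)%N.
Proof. by z2c c; z2fin. Qed.
Lemma z2g (a b c : 'Z_2) : a != b ->
  (nat_of_bool ((a + 1)%R == c) + nat_of_bool ((b + 1)%R == c) = (a == c) + (b == c))%N.
Proof. by z2c a; z2c b; z2c c; z2fin. Qed.
Lemma z2h (b : bool) : (1 - b%:R : 'Z_2) = 1 + b%:R.
Proof. by case: b; z2fin. Qed.
Lemma z2odd (k : nat) : (k%:R : 'Z_2) = (odd k)%:R.
Proof.
elim: k => [//|k IH]; rewrite -[k.+1]addn1 natrD IH oddD addbT.
by case: (odd k); z2fin.
Qed.

Section S2.
Variable (n : nat).
Local Notation G := 'Z_2.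

Lemma wl (j : 'I_n) : lift ord_max j = widen_ord (leqnSn n) j.
Proof. by apply/val_inj; rewrite [LHS]lift_max. Qed.

Definition flip (g : qidx G n) (i k : 'I_n.+1) : qidx G n :=
  [ffun j => g j + (((widen_ord (leqnSn n) j == i)%:R + (widen_ord (leqnSn n) j == k)%:R))].

Lemma sum_widen (i : 'I_n.+1) :
  \sum_(j < n) ((widen_ord (leqnSn n) j == i)%:R : G) = 1 + (ord_max == i)%:R.
Proof.
have H : \sum_(x < n.+1) ((x == i)%:R : G) = 1.
  by rewrite (bigD1 i) //= eqxx big1 ?addr0 // => x /negbTE ->.
move: H; rewrite big_ord_recr /= => /(congr1 (fun t => t - (ord_max == i)%:R)); rewrite addrK => ->.
by rewrite z2h.
Qed.

Lemma ext_flip g i k x :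
  ext (flip g i k) x = ext g x + ((x == i)%:R + (x == k)%:R).
Proof.
case: (unliftP ord_max x) => [j ->|->].
  by rewrite /ext liftK ffunE wl.
rewrite !ext_max.
under eq_bigr => j _ do rewrite ffunE.
rewrite big_split /= big_split /= !sum_widen; congr (_ + _).
by rewrite addrACA z2c2 add0r.
Qed.

Lemma sum_ext (g : qidx G n) : \sum_x ext g x = 0.
Proof.
rewrite big_ord_recr /= ext_max.
under eq_bigr => j _ do rewrite ext_w.
exact: z2c2.
Qed.

Lemma dist_even (g v : qidx G n) :
  ~~ odd (\sum_x (ext g x != ext v x))%N.
Proof.
have H : (((\sum_x (ext g x != ext v x))%N)%:R : G) = 0.
  rewrite natr_sum.
  under eq_bigr => x _ do rewrite -z2e.
  by rewrite sumrB !sum_ext subr0.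
move: H; rewrite z2odd; case: odd => //.
Qed.

End S2.
Section S3.
Variable (R : realType) (n : nat).
Local Notation G := 'Z_2.
Local Notation K := #|{: qidx G n}|.
Local Notation Ka := #|{: aidx G n}|.
Local Notation Q := (qring R G n).
Local Notation A := (aring R G n).
Local Notation E := (@E n).
Local Notation img := (@img n).
Local Notation cnt := (@cnt n).

Definition U2 (a b : 'I_K) : 'X_{1..K} := (U_(a) + U_(b))%MM.

Definition quads : seq Q :=
  [seq 'X_[U2 t.1.1.1 t.1.1.2] - 'X_[U2 t.1.2 t.2]
  | t <- enum {: ('I_K * 'I_K * 'I_K * 'I_K)%type}
  & img (U2 t.1.1.1 t.1.1.2) == img (U2 t.1.2 t.2)].

Definition Jmem (p : Q) := exists c : 'I_(size quads) -> Q,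
  p = \sum_i c i * quads`_i.

Lemma Jmem0 : Jmem 0.
Proof. by exists (fun _ => 0); rewrite big1 // => i _; rewrite mul0r. Qed.

Lemma JmemD p q : Jmem p -> Jmem q -> Jmem (p + q).
Proof.
move=> [c1 ->] [c2 ->]; exists (fun i => c1 i + c2 i).
by rewrite -big_split /=; apply: eq_bigr => i _; rewrite mulrDl.
Qed.

Lemma JmemM q p : Jmem p -> Jmem (q * p).
Proof.
move=> [c ->]; exists (fun i => q * c i).
by rewrite mulr_sumr; apply: eq_bigr => i _; rewrite mulrA.
Qed.

Lemma JmemN p : Jmem p -> Jmem (- p).
Proof. by move=> H; rewrite -mulN1r; apply: JmemM. Qed.

Lemma JmemB p q : Jmem p -> Jmem q -> Jmem (p - q).
Proof. by move=> Hp Hq; apply: JmemD => //; apply: JmemN. Qed.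

Lemma Jmem_sum (I : eqType) (r : seq I) (F : I -> Q) :
  (forall i, i \in r -> Jmem (F i)) -> Jmem (\sum_(i <- r) F i).
Proof.
move=> H; rewrite big_seq; apply: (big_ind Jmem) => //.
- exact: Jmem0.
- exact: JmemD.
Qed.

Lemma Jmem_quads b : b \in quads -> Jmem b.
Proof.
move=> bB; have iB : (index b quads < size quads)%N by rewrite index_mem.
exists (fun i => ((i == Ordinal iB)%:R)).
rewrite (bigD1 (Ordinal iB)) //= eqxx mul1r big1 ?addr0.
  by rewrite nth_index.
by move=> i /negbTE ->; rewrite mul0r.
Qed.

Lemma Jquad a b c d : img (U2 a b) = img (U2 c d) ->
  Jmem ('X_[U2 a b] - 'X_[U2 c d]).
Proof.
move=> H; apply: Jmem_quads.
apply/mapP; exists (a, b, c, d) => //.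
by rewrite mem_filter /= H eqxx mem_enum.
Qed.

Definition Rr (m m' : 'X_{1..K}) := Jmem ('X_[m] - 'X_[m']).

Lemma Rr_refl m : Rr m m.
Proof. by rewrite /Rr subrr; exact: Jmem0. Qed.

Lemma Rr_sym m m' : Rr m m' -> Rr m' m.
Proof. by move=> H; rewrite /Rr -opprB; apply: JmemN. Qed.

Lemma Rr_trans m1 m2 m3 : Rr m1 m2 -> Rr m2 m3 -> Rr m1 m3.
Proof.
move=> H1 H2; have := JmemD H1 H2.
by rewrite /Rr addrA subrK.
Qed.

Lemma Rr_shift e m m' : Rr m m' -> Rr (e + m)%MM (e + m')%MM.
Proof.
by move=> H; rewrite /Rr !mpolyXD -mulrBr; apply: JmemM.
Qed.

Lemma cntD m1 m2 x c : cnt (m1 + m2)%MM x c = (cnt m1 x c + cnt m2 x c)%N.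
Proof.
rewrite /cnt -big_split /=; apply: eq_bigr => j _.
by rewrite mnmDE mulnDl.
Qed.

Lemma cntU a x c : cnt U_(a)%MM x c = (E a x == c).
Proof.
rewrite /cnt (bigD1 a) //= mnm1E eqxx mul1n big1 ?addn0 //.
by move=> j ja; rewrite mnm1E eq_sym (negbTE ja).
Qed.

Lemma mdeg_cnt m x : mdeg m = (cnt m x 0%R + cnt m x 1%R)%N.
Proof.
rewrite mdegE /cnt -big_split /=; apply: eq_bigr => j _.
by rewrite -mulnDr z2f muln1.
Qed.

Definition cnteq (m m' : 'X_{1..K}) := forall x c, cnt m x c = cnt m' x c.

Lemma cnteq_mdeg m m' : cnteq m m' -> mdeg m = mdeg m'.
Proof. by move=> H; rewrite !(mdeg_cnt _ ord0) !H. Qed.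

Lemma cnteq_sym m m' : cnteq m m' -> cnteq m' m.
Proof. by move=> H x c; rewrite H. Qed.

Lemma cnteq_trans m1 m2 m3 : cnteq m1 m2 -> cnteq m2 m3 -> cnteq m1 m3.
Proof. by move=> H1 H2 x c; rewrite H1 H2. Qed.

Lemma cnteq_cancel e m m' : cnteq (e + m)%MM (e + m')%MM -> cnteq m m'.
Proof. by move=> H x c; have := H x c; rewrite !cntD => /addnI. Qed.

Lemma decomp (m : 'X_{1..K}) a : (0 < m a)%N -> m = (U_(a) + (m - U_(a)))%MM.
Proof.
move=> H; apply/mnmP => j; rewrite mnmDE mnmBE mnm1E.
by case: eqP => [<-|_]; rewrite ?subnKC ?subn0.
Qed.

Lemma cnteq_img m m' : cnteq m m' <-> img m = img m'.
Proof. by split => [H|H]; apply/img_cnt. Qed.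

End S3.
Lemma two_pts (I : finType) (P : pred I) :
  (2 <= \sum_x (P x : nat))%N -> exists i k, [/\ i != k, P i & P k].
Proof.
have -> : (\sum_x (P x : nat))%N = #|P|.
  rewrite -sum1_card [RHS]big_mkcond; apply: eq_bigr => x _.
  by rewrite unfold_in; case: (P x).
by case/card_gt1P => i [k [Pi Pk ik]]; exists i, k.
Qed.

Section S4.
Variable (R : realType) (n : nat).
Local Notation G := 'Z_2.
Local Notation K := #|{: qidx G n}|.
Local Notation Q := (qring R G n).
Local Notation E := (@E n).
Local Notation img := (@img n).
Local Notation cnt := (@cnt n).
Local Notation cnteq := (@cnteq n).
Local Notation Rr := (@Rr R n).

Definition dist (g v : 'I_K) : nat := (\sum_x (E g x != E v x))%N.
Definition acnt (g v h : 'I_K) : nat :=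
  (\sum_x ((E g x != E v x) && (E h x == E v x)))%N.

Lemma dist_sym g v : dist g v = dist v g.
Proof. by apply: eq_bigr => x _; rewrite eq_sym. Qed.

Lemma acnt_sum g v w : (acnt g v w + acnt v g w)%N = dist g v.
Proof.
rewrite /acnt -big_split; apply: eq_bigr => x _ /=.
rewrite [E v x == _]eq_sym; case: eqP => //= H.
by rewrite addnC z2d //; apply/eqP.
Qed.

Lemma acnt_self g v : acnt g v g = 0%N.
Proof. by apply: big1 => x _; case: eqP. Qed.

Lemma Eeq g v : (forall x, E g x = E v x) -> g = v.
Proof.
move=> H; apply: enum_val_inj; apply/ffunP => j.
by have := H (widen_ord (leqnSn n) j); rewrite /E !ext_w.
Qed.

Lemma dist_ge2 g v : g != v -> (2 <= dist g v)%N.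
Proof.
move=> gv.
have [x Hx] : exists x, E g x != E v x.
  apply/existsP; apply: contraR gv => /existsPn H.
  by apply/eqP/Eeq => x; move: (H x); rewrite negbK => /eqP.
have H1 : (0 < dist g v)%N by rewrite /dist (bigD1 x) //= Hx.
have := dist_even (enum_val g) (enum_val v); rewrite -/(dist g v).
by case: (dist g v) H1 => [|[|]].
Qed.

Lemma acnt_count (m : 'X_{1..K}) g v :
  (\sum_h m h * acnt g v h)%N = (\sum_x (E g x != E v x) * cnt m x (E v x))%N.
Proof.
rewrite /acnt /cnt.
under eq_bigr => h _ do rewrite big_distrr.
rewrite exchange_big; apply: eq_bigr => x _ /=.
rewrite big_distrr; apply: eq_bigr => h _ /=.
by case: (E g x != E v x); rewrite ?mul1n ?mul0n ?muln0.
Qed.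

Lemma counting (m m' : 'X_{1..K}) g v : cnteq m m' -> (0 < m g)%N -> (0 < m' v)%N -> g != v ->
  (exists h, (0 < m h)%N /\ (2 <= acnt g v h)%N) \/ (exists w, (0 < m' w)%N /\ (2 <= acnt v g w)%N).
Proof.
move=> Hc Hg Hv gv.
case: (boolP [exists h, (0 < m h)%N && (2 <= acnt g v h)%N]) => [/existsP [h /andP[]]|H1].
  by move=> *; left; exists h.
case: (boolP [exists h, (0 < m' h)%N && (2 <= acnt v g h)%N]) => [/existsP [h /andP[]]|H2].
  by move=> *; right; exists h.
exfalso.
have S : (\sum_h m h * acnt g v h)%N = (\sum_h m' h * acnt g v h)%N.
  by rewrite !acnt_count; apply: eq_bigr => x _; rewrite Hc.
have up : (\sum_h m h * acnt g v h + m g <= mdeg m)%N.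
  rewrite mdegE [X in (_ <= X)%N](bigD1 g) //= [X in (X + _ <= _)%N](bigD1 g) //= acnt_self muln0 add0n addnC leq_add2l.
  apply: leq_sum => h _.
  case: (posnP (m h)) => [->//|mh]; rewrite -[X in (_ <= X)%N]muln1 leq_mul2l.
  move/existsPn: H1 => /(_ h); rewrite mh /= -ltnNge ltnS => ->; by rewrite orbT.
have low : (mdeg m' <= \sum_h m' h * acnt g v h)%N.
  rewrite mdegE; apply: leq_sum => h _.
  case: (posnP (m' h)) => [->//|mh]; rewrite -[X in (X <= _)%N]muln1 leq_mul2l.
  move/existsPn: H2 => /(_ h); rewrite mh /= -ltnNge ltnS => H.
  have := acnt_sum g v h; have := dist_ge2 gv.
  move=> D E1; rewrite orbC -/(is_true _); apply/orP; left.
  by rewrite lt0n; apply/eqP => A0; move: D; rewrite -E1 A0 add0n; move: H; case: (acnt v g h) => [|[|]].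
have := cnteq_mdeg Hc; move: up low; rewrite S => up low Hd.
have := leq_trans (leq_add low (leqnn (m g))) up.
by rewrite Hd -{2}[mdeg m']addn0 leq_add2l leqn0 => /eqP Hg0; rewrite Hg0 in Hg.
Qed.

End S4.
Section S5.
Variable (R : realType) (n : nat).
Local Notation G := 'Z_2.
Local Notation K := #|{: qidx G n}|.
Local Notation Q := (qring R G n).
Local Notation E := (@E n).
Local Notation img := (@img n).
Local Notation cnt := (@cnt n).
Local Notation cnteq := (@cnteq n).
Local Notation Rr := (@Rr R n).
Local Notation dist := (@dist n).
Local Notation acnt := (@acnt n).

Definition fl (g : 'I_K) (i k : 'I_n.+1) : 'I_K := enum_rank (flip (enum_val g) i k).

Lemma E_fl g i k x : E (fl g i k) x = E g x + ((x == i)%:R + (x == k)%:R).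
Proof. by rewrite /E /fl enum_rankK ext_flip. Qed.

Lemma move_step (m : 'X_{1..K}) g v h : (0 < m g)%N -> (0 < m h)%N -> (2 <= acnt g v h)%N ->
  exists m1 g1, [/\ Rr m m1, cnteq m1 m, (0 < m1 g1)%N & (dist g1 v < dist g v)%N].
Proof.
move=> Hg Hh Ha.
have [i [k [ik /andP[Ti Hi] /andP[Tk Hk]]]] := two_pts Ha.
have gh : g != h.
  by apply: contraTneq Ha => <-; rewrite acnt_self.
set g' := fl g i k; set h' := fl h i k.
have Ei : forall a x, x == i -> E (fl a i k) x = E a x + 1.
  by move=> a x /eqP ->; rewrite E_fl eqxx (negbTE ik) /= ?mulr1n ?mulr0n addr0.
have Ek : forall a x, x == k -> E (fl a i k) x = E a x + 1.
  by move=> a x /eqP ->; rewrite E_fl eqxx eq_sym (negbTE ik) /= ?mulr1n ?mulr0n add0r.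
have Eo : forall a x, x != i -> x != k -> E (fl a i k) x = E a x.
  by move=> a x xi xk; rewrite E_fl (negbTE xi) (negbTE xk) /= ?mulr0n addr0 addr0.
have ghi : E g i != E h i by rewrite (eqP Hi).
have ghk : E g k != E h k by rewrite (eqP Hk).
have Q2 : cnteq (U_(g) + U_(h))%MM (U_(g') + U_(h'))%MM.
  move=> x c; rewrite !cntD !cntU.
  case: (boolP (x == i)) => xi.
    by rewrite !Ei // (eqP xi) (z2g _ ghi).
  case: (boolP (x == k)) => xk.
    by rewrite !Ek // (eqP xk) (z2g _ ghk).
  by rewrite !Eo.
set m1 := (m - U_(g))%MM.
have Hm : m = (U_(g) + m1)%MM by apply: decomp.
have Hm1h : (0 < m1 h)%N by rewrite /m1 mnmBE mnm1E (negbTE gh) subn0.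
set m2 := (m1 - U_(h))%MM.
have Hm1 : m1 = (U_(h) + m2)%MM by apply: decomp.
have Em : m = (m2 + (U_(g) + U_(h)))%MM by rewrite Hm Hm1 addmA addmC.
exists (m2 + (U_(g') + U_(h')))%MM, g'; split.
- rewrite Em; apply: Rr_shift; apply: Jquad; apply/cnteq_img; exact: Q2.
- by rewrite Em => x c; rewrite [LHS]cntD [RHS]cntD Q2.
- by rewrite !mnmDE mnm1E eqxx add1n addnS.
- rewrite /dist [X in (X < _)%N](bigD1 i) //= [X in (_ < X)%N](bigD1 i) //=.
  rewrite Ei // -(z2a Ti) eqxx Ti /= add0n add1n ltnS.
  apply: leq_sum => x xi.
  case: (boolP (x == k)) => xk.
    by rewrite Ek // (eqP xk) -(z2a Tk) eqxx.
  by rewrite Eo.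
Qed.

End S5.
Section S6.
Variable (R : realType) (n : nat).
Local Notation G := 'Z_2.
Local Notation K := #|{: qidx G n}|.
Local Notation Q := (qring R G n).
Local Notation E := (@E n).
Local Notation img := (@img n).
Local Notation cnt := (@cnt n).
Local Notation cnteq := (@cnteq n).
Local Notation Rr := (@Rr R n).
Local Notation dist := (@dist n).
Local Notation acnt := (@acnt n).

Lemma conn (m m' : 'X_{1..K}) : cnteq m m' -> Rr m m'.
Proof.
move: {2}(mdeg m) (erefl (mdeg m)) => d.
elim/ltn_ind: d m m' => d IH m m' Hd Hc.
case: (posnP d) => [d0|dpos].
  have m0 : m = 0%MM by apply/eqP; rewrite -mdeg_eq0 Hd d0.
  have m0' : m' = 0%MM by apply/eqP; rewrite -mdeg_eq0 -(cnteq_mdeg Hc) Hd d0.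
  by rewrite m0 m0'; exact: Rr_refl.
have [g Hg] : exists g, (0 < m g)%N.
  apply/existsP; apply: contraLR dpos; rewrite negb_exists => /forallP H.
  by rewrite -Hd mdegE big1 // => j _; move: (H j); rewrite lt0n negbK => /eqP.
have [v Hv] : exists v, (0 < m' v)%N.
  apply/existsP; apply: contraLR dpos; rewrite negb_exists => /forallP H.
  by rewrite -Hd (cnteq_mdeg Hc) mdegE big1 // => j _; move: (H j); rewrite lt0n negbK => /eqP.
suff : forall D m m' g v, mdeg m = d -> cnteq m m' -> (0 < m g)%N -> (0 < m' v)%N ->
    (dist g v <= D)%N -> Rr m m'.
  by move=> /(_ _ m m' g v Hd Hc Hg Hv (leqnn _)).
move=> D; elim/ltn_ind: D => D IHD {}m {}m' {}g {}v {}Hd {}Hc {}Hg {}Hv HD.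
case: (eqVneq g v) => [ev|gv].
  rewrite -ev in Hv.
  have Hm := decomp Hg; have Hm' := decomp Hv.
  rewrite Hm Hm'; apply: Rr_shift.
  apply: (IH (mdeg (m - U_(g))%MM)) => //.
    by rewrite -Hd {2}Hm mdegD mdeg1.
  by apply: (@cnteq_cancel _ (U_(g))%MM); rewrite -Hm -Hm'.
case: (counting Hc Hg Hv gv) => [[h [Hh Ha]]|[w [Hw Ha]]].
  have [m1 [g1 [R1 C1 P1 D1]]] := move_step R Hg Hh Ha.
  apply: (Rr_trans R1); apply: (IHD (dist g1 v) _ m1 m' g1 v) => //.
  - exact: leq_trans D1 HD.
  - by rewrite (cnteq_mdeg C1).
  - exact: cnteq_trans C1 Hc.
have [m1 [v1 [R1 C1 P1 D1]]] := move_step R Hv Hw Ha.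
apply: (Rr_trans _ (Rr_sym R1)); apply: (IHD (dist g v1) _ m m1 g v1) => //.
- by rewrite dist_sym; apply: leq_trans D1 _; rewrite dist_sym.
- exact: cnteq_trans Hc (cnteq_sym C1).
Qed.

Definition rep (m : 'X_{1..K}) : 'X_{1..K} :=
  xchoose (ex_intro (fun m' => img m' == img m) m (eqxx _)).

Lemma rep_img m : img (rep m) = img m.
Proof. exact/eqP/(xchooseP (ex_intro (fun m' => img m' == img m) m (eqxx _))). Qed.

Lemma rep_eq m1 m2 : img m1 = img m2 -> rep m1 = rep m2.
Proof. by move=> H; rewrite /rep; apply: eq_xchoose => x; rewrite H. Qed.

Lemma toricE (p : Q) : toric_map p = \sum_(m <- msupp p) p@_m *: 'X_[img m].
Proof.
rewrite /toric_map comp_mpolyEX; apply: eq_bigr => m _; congr (_ *: _).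
exact: toricX.
Qed.

Lemma toricB (p q : Q) : toric_map (p - q) = toric_map p - toric_map q.
Proof. by rewrite /toric_map comp_mpolyB. Qed.

Lemma kernel_J (p : Q) : toric_map p = 0 -> Jmem p.
Proof.
move=> Hp.
set r := \sum_(m <- msupp p) p@_m *: ('X_[rep m] : Q).
have -> : p = (p - r) + r by rewrite subrK.
apply: JmemD.
  rewrite {1}(mpolyE p) /r -sumrB; apply: Jmem_sum => m _.
  rewrite -scalerBr -mul_mpolyC; apply: JmemM; apply: conn.
  by apply/cnteq_img; rewrite rep_img.
suff -> : r = 0 by exact: Jmem0.
apply/mpolyP => w; rewrite mcoeff0 /r raddf_sum /=.
under eq_bigr => m _ do rewrite mcoeffZ mcoeffX.
case: (boolP (has (fun m => rep m == w) (msupp p))) => [/hasP [m0 m0in /eqP Hm0]|Hn].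
  have Heq : forall m, (rep m == w) = (img m == img m0).
    move=> m; apply/eqP/eqP => [H|H].
      by rewrite -rep_img H -Hm0 rep_img.
    by rewrite -Hm0; apply: rep_eq.
  under eq_bigr => m _ do rewrite Heq.
  have := congr1 (mcoeff (img m0)) Hp; rewrite toricE mcoeff0 raddf_sum /= => H.
  apply: (etrans _ H).
  by apply: eq_bigr => m _; rewrite mcoeffZ mcoeffX.
rewrite big_seq big1 // => m min.
by move/hasPn: Hn => /(_ m min) /negbTE ->; rewrite mulr0.
Qed.

End S6.

Theorem theorem5p2 (R : realType) (n : nat) :
  (3 <= n)%N -> toric_ideal_generated_by_deg2_binomials R 'Z_2 n.
Proof.
move=> _; exists (quads R n); split.
- move=> b /mapP [[[[a b'] c] d] Hin ->]; rewrite mem_filter in Hin.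
  case/andP: Hin => /eqP /= Himg _; split.
    by exists (U2 a b'), (U2 c d); rewrite /U2 !mdegD !mdeg1.
  by rewrite /in_toric_ideal toricB !toricX Himg subrr.
- move=> p /kernel_J [c Hc]; exists [seq c i | i <- enum 'I_(size (quads R n))]; split.
    by rewrite size_map size_enum_ord.
  rewrite Hc; apply: eq_bigr => i _; congr (_ * _).
  by rewrite (nth_map i) ?size_enum_ord // nth_ord_enum.
Qed.
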